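(* Let $P=P_0+P_\delta\in\mathbb{R}^{p\times m}$, $Y_d\in\mathbb{R}^p$, plant $Y_k=PU_k+N_k$, $E_k=Y_d-Y_k$, $\bar U_k=-\Delta U_k$, $D_k=-\Delta N_k$, $\mathcal D_k=D_k+P_\delta\bar U_k$ (so $E_{k+1}=E_k+P_0\bar U_k+\mathcal D_k$), $\bar B_0=\begin{bmatrix}P_0\\0\end{bmatrix}$, $\bar L\in\mathbb{R}^{2p\times p}$, and the ESO $\hat{\bar{\mathcal X}}_{k+1}=(\bar A-\bar L\bar C)\hat{\bar{\mathcal X}}_k+\bar B_0\bar U_k+\bar LE_k$, $\hat{\bar{\mathcal X}}_k=\begin{bmatrix}\hat E_k\\\hat{\mathcal D}_k\end{bmatrix}$. Let $K\in\mathbb{R}^{m\times p}$, $\bar H\in\mathbb{R}^{p\times p}$, and apply $\bar U_k=-K(E_k+\bar H\hat{\mathcal D}_k)$. Then $\begin{bmatrix}E_{k+1}\\\hat{\bar{\mathcal X}}_{k+1}\end{bmatrix}=G\begin{bmatrix}E_{k}\\\hat{\bar{\mathcal X}}_{k}\end{bmatrix}+\begin{bmatrix}I\\0\end{bmatrix}\mathcal D_k$ with $G=\begin{bmatrix}I-P_0K&-P_0K\bar HF\\\bar L-\bar B_0K&\bar A-\bar L\bar C-\bar B_0K\bar HF\end{bmatrix}$, and with $T=\begin{bmatrix}I&0\\-\bar C^{\top}&I\end{bmatrix}$ one has $TGT^{-1}=\begin{bmatrix}I-P_0K&-P_0K\bar HF\\0&\bar A-\bar L\bar C\end{bmatrix}$.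 Hence the separation principle holds: the eigenvalues of $G$ are those of $I-P_0K$ together with those of $\bar A-\bar L\bar C$, and $K$, $\bar H$, $\bar L$ can be designed separately.
   Context: $\mathbb{Z}_+=\{0,1,2,\dots\}$; $\Delta f_k=f_{k+1}-f_k$. $U_k\in\mathbb{R}^m$ input, $Y_k\in\mathbb{R}^p$ output, $(N_k)\subset\mathbb{R}^p$ a bounded uncertainty; $P_0$ is a known nominal model and $P_\delta$ an unknown model uncertainty. $\bar A=\begin{bmatrix}I_p&I_p\\0&I_p\end{bmatrix}$, $\bar C=\begin{bmatrix}I_p&0\end{bmatrix}$, $F=\begin{bmatrix}0&I_p\end{bmatrix}$. *)

(* Defs.v *)
From HB Require Import structures.
From mathcomp Require Import all_boot all_order all_algebra.
Set Implicit Arguments. Unset Strict Implicit. Unset Printing Implicit Defensive.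
Import Order.TTheory GRing.Theory Num.Theory.
Local Open Scope ring_scope.

Section Defs.
Variables (R : realFieldType) (p m : nat).

Definition Abar : 'M[R]_(p + p) := block_mx 1%:M 1%:M 0 1%:M.
Definition Cbar : 'M[R]_(p, p + p) := row_mx 1%:M 0.
Definition Fsel : 'M[R]_(p, p + p) := row_mx 0 1%:M.
Definition Bbar0 (P0 : 'M[R]_(p, m)) : 'M[R]_(p + p, m) := col_mx P0 0.

Definition Yout (P0 Pd : 'M[R]_(p, m)) (U : nat -> 'cV[R]_m) (N : nat -> 'cV[R]_p)
  (k : nat) : 'cV[R]_p := (P0 + Pd) *m U k + N k.
Definition Err P0 Pd (Yd : 'cV[R]_p) U N k : 'cV[R]_p := Yd - Yout P0 Pd U N k.
Definition Ubar (U : nat -> 'cV[R]_m) k : 'cV[R]_m := - (U k.+1 - U k).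
Definition Dn (N : nat -> 'cV[R]_p) k : 'cV[R]_p := - (N k.+1 - N k).
Definition Dcal (Pd : 'M[R]_(p, m)) U N k : 'cV[R]_p := Dn N k + Pd *m Ubar U k.

Definition Gcl (P0 : 'M[R]_(p, m)) (Lbar : 'M[R]_(p + p, p)) (K : 'M[R]_(m, p))
  (Hbar : 'M[R]_p) : 'M[R]_(p + (p + p)) :=
  block_mx (1%:M - P0 *m K) (- (P0 *m K *m Hbar *m Fsel))
           (Lbar - Bbar0 P0 *m K) (Abar - Lbar *m Cbar - Bbar0 P0 *m K *m Hbar *m Fsel).

Definition Tsim : 'M[R]_(p + (p + p)) := block_mx 1%:M 0 (- Cbar^T) 1%:M.
End Defs.

(* Main.v *)
Require Import Defs.
From HB Require Import structures.
From mathcomp Require Import all_boot all_order all_algebra ring.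
Import Order.TTheory GRing.Theory Num.Theory.
Local Open Scope ring_scope.

Lemma part1 (R : realFieldType) (p m : nat)
  (P0 Pd : 'M[R]_(p, m)) (Yd : 'cV[R]_p)
  (U : nat -> 'cV[R]_m) (N : nat -> 'cV[R]_p) k :
  Err P0 Pd Yd U N k.+1 =
     Err P0 Pd Yd U N k + P0 *m Ubar U k + Dcal Pd U N k.
Proof.
rewrite /Err /Yout /Dcal /Dn /Ubar !mulmxN !mulmxBr !mulmxDl.
move: (P0 *m U k) (P0 *m U k.+1) (Pd *m U k) (Pd *m U k.+1) (N k) (N k.+1) => a b c d e f.
apply/matrixP => i j; rewrite !mxE; ring.
Qed.
Lemma part2 (R : realFieldType) (p m : nat)
  (P0 Pd : 'M[R]_(p, m)) (Yd : 'cV[R]_p)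
  (U : nat -> 'cV[R]_m) (N : nat -> 'cV[R]_p)
  (Lbar : 'M[R]_(p + p, p)) (K : 'M[R]_(m, p)) (Hbar : 'M[R]_p)
  (Xhat : nat -> 'cV[R]_(p + p))
  (hESO : forall k, Xhat k.+1 =
     (Abar R p - Lbar *m Cbar R p) *m Xhat k + Bbar0 P0 *m Ubar U k
       + Lbar *m Err P0 Pd Yd U N k)
  (hctrl : forall k, Ubar U k =
     - (K *m (Err P0 Pd Yd U N k + Hbar *m (Fsel R p *m Xhat k)))) k :
  col_mx (Err P0 Pd Yd U N k.+1) (Xhat k.+1) =
     Gcl P0 Lbar K Hbar *m col_mx (Err P0 Pd Yd U N k) (Xhat k)
       + col_mx (Dcal Pd U N k) 0.
Proof.
rewrite /Gcl mul_block_col add_col_mx addr0; congr col_mx.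
  rewrite part1 hctrl; move: (Err P0 Pd Yd U N k) (Dcal Pd U N k) => E D.
  rewrite ?mulmxN ?mulmxDr ?mulNmx ?mulmxBl ?mul1mx ?mulmxA.
  move: (P0 *m K *m E) (P0 *m K *m Hbar *m Fsel R p *m Xhat k) => a b.
  apply/matrixP => i j; rewrite !mxE; ring.
rewrite hESO hctrl; move: (Err P0 Pd Yd U N k) => E.
rewrite ?mulmxN ?mulmxDr ?mulNmx ?mulmxBl ?mulmxDl ?mulmxA.
move: (Lbar *m E) (Bbar0 P0 *m K *m E) (Abar R p *m Xhat k) (Lbar *m Cbar R p *m Xhat k) (Bbar0 P0 *m K *m Hbar *m Fsel R p *m Xhat k) => a b c d e.
apply/matrixP => i j; rewrite !mxE; ring.
Qed.
Section S.
Variables (R : realFieldType) (p m : nat).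
Variables (P0 : 'M[R]_(p, m)) (Lbar : 'M[R]_(p + p, p)) (K : 'M[R]_(m, p)) (Hbar : 'M[R]_p).

Let Ct : 'M[R]_(p + p, p) := (Cbar R p)^T.

Lemma CtE : Ct = col_mx 1%:M 0.
Proof. by rewrite /Ct /Cbar tr_row_mx trmx1 trmx0. Qed.

Lemma FC : Fsel R p *m Ct = 0.
Proof. by rewrite CtE /Fsel mul_row_col mul0mx mulmx0 addr0. Qed.

Lemma CC : Cbar R p *m Ct = 1%:M.
Proof. by rewrite CtE /Cbar mul_row_col mul1mx mulmx0 addr0. Qed.

Lemma AC : Abar R p *m Ct = Ct.
Proof.
by rewrite CtE /Abar mul_block_col ?mul1mx ?mulmx0 ?mul0mx ?addr0.
Qed.

Lemma BC : Bbar0 P0 = Ct *m P0.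
Proof. by rewrite CtE /Bbar0 mul_col_mx mul1mx mul0mx. Qed.

Definition Ti : 'M[R]_(p + (p + p)) := block_mx 1%:M 0 Ct 1%:M.

Lemma TTi : Tsim R p *m Ti = 1%:M.
Proof.
rewrite /Tsim /Ti mulmx_block [RHS]scalar_mx_block.
rewrite ?mul1mx ?mulmx1 ?mulmx0 ?mul0mx ?addr0 ?add0r.
by rewrite addNr.
Qed.

Lemma Tunit : Tsim R p \in unitmx.
Proof. by case: (mulmx1_unit TTi). Qed.

Lemma invT : invmx (Tsim R p) = Ti.
Proof.
by rewrite -[RHS](mulKmx Tunit) TTi mulmx1.
Qed.

Lemma GTi : Gcl P0 Lbar K Hbar *m Ti =
  block_mx (1%:M - P0 *m K) (- (P0 *m K *m Hbar *m Fsel R p))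
    (Ct *m (1%:M - P0 *m K))
    (Abar R p - Lbar *m Cbar R p - Bbar0 P0 *m K *m Hbar *m Fsel R p).
Proof.
rewrite /Gcl /Ti mulmx_block.
rewrite ?mulmx1 ?mulmx0 ?addr0 ?add0r.
congr block_mx.
- by rewrite mulNmx -!mulmxA FC ?mulmx0 oppr0 addr0.
- rewrite !mulmxBl -[Lbar *m _ *m Ct]mulmxA CC mulmx1 AC -[_ *m Fsel R p *m Ct]mulmxA FC mulmx0 subr0.
  rewrite BC -[Ct *m P0 *m K]mulmxA mulmxBr mulmx1.
  move: (Ct *m (P0 *m K)) => b.
  apply/matrixP => i j; rewrite !mxE; ring.
Qed.

Lemma part3 : Tsim R p *m Gcl P0 Lbar K Hbar *m invmx (Tsim R p) =
    block_mx (1%:M - P0 *m K) (- (P0 *m K *m Hbar *m Fsel R p))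
             0 (Abar R p - Lbar *m Cbar R p).
Proof.
rewrite invT -mulmxA GTi /Tsim mulmx_block.
rewrite ?mul1mx ?mul0mx ?addr0 ?add0r -/Ct.
congr block_mx.
- by rewrite mulNmx addNr.
- rewrite mulmxN mulNmx opprK BC -!mulmxA.
  move: (Ct *m (P0 *m (K *m (Hbar *m Fsel R p)))) => b.
  apply/matrixP => i j; rewrite !mxE; ring.
Qed.
End S.
Lemma char_poly_conj (R : fieldType) n (T A : 'M[R]_n) : T \in unitmx ->
  char_poly (T *m A *m invmx T) = char_poly A.
Proof.
move=> uT.
have e : char_poly_mx (T *m A *m invmx T) =
   map_mx polyC T *m char_poly_mx A *m map_mx polyC (invmx T).
  rewrite /char_poly_mx !map_mxM mulmxBr mulmxBl scalar_mxC.
  have h : map_mx polyC T *m map_mx polyC (invmx T) = 1%:M.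
    by rewrite -map_mxM (mulmxV uT) map_mx1.
  by rewrite -['X%:M *m _ *m _]mulmxA h mulmx1.
rewrite /char_poly e !det_mulmx !det_map_mx mulrAC -rmorphM -det_mulmx (mulmxV uT) det1 rmorph1 mul1r.
done.
Qed.

Lemma char_poly_ublock (R : fieldType) n1 n2 (A : 'M[R]_n1) B (D : 'M[R]_n2) :
  char_poly (block_mx A B 0 D) = char_poly A * char_poly D.
Proof.
rewrite /char_poly /char_poly_mx map_block_mx scalar_mx_block opp_block_mx add_block_mx.
by rewrite map_mx0 oppr0 addr0 det_ublock.
Qed.

Theorem lemma6 (R : realFieldType) (p m : nat)
  (P0 Pd : 'M[R]_(p, m)) (Yd : 'cV[R]_p)
  (U : nat -> 'cV[R]_m) (N : nat -> 'cV[R]_p)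
  (Lbar : 'M[R]_(p + p, p)) (K : 'M[R]_(m, p)) (Hbar : 'M[R]_p)
  (Xhat : nat -> 'cV[R]_(p + p))
  (hESO : forall k, Xhat k.+1 =
     (Abar R p - Lbar *m Cbar R p) *m Xhat k + Bbar0 P0 *m Ubar U k
       + Lbar *m Err P0 Pd Yd U N k)
  (hctrl : forall k, Ubar U k =
     - (K *m (Err P0 Pd Yd U N k + Hbar *m (Fsel R p *m Xhat k)))) :
  (forall k, Err P0 Pd Yd U N k.+1 =
     Err P0 Pd Yd U N k + P0 *m Ubar U k + Dcal Pd U N k) /\
  (forall k, col_mx (Err P0 Pd Yd U N k.+1) (Xhat k.+1) =
     Gcl P0 Lbar K Hbar *m col_mx (Err P0 Pd Yd U N k) (Xhat k)
       + col_mx (Dcal Pd U N k) 0) /\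
  Tsim R p *m Gcl P0 Lbar K Hbar *m invmx (Tsim R p) =
    block_mx (1%:M - P0 *m K) (- (P0 *m K *m Hbar *m Fsel R p))
             0 (Abar R p - Lbar *m Cbar R p) /\
  char_poly (Gcl P0 Lbar K Hbar) =
    char_poly (1%:M - P0 *m K) * char_poly (Abar R p - Lbar *m Cbar R p).
Proof.
split; first exact: part1.
split; first by move=> k; apply: part2.
split; first exact: part3.
by rewrite -(char_poly_conj _ _ _ _ (Tunit R p)) part3 char_poly_ublock.
Qed.
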